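(* Let $(x^k,z^k)\in\operatorname{conv}(X)\times Z$ satisfy the $z$-optimality condition $z^k\in\arg\min_{z\in Z}\|Qx^k-z\|_2$. Then for every $\omega\in Z^\perp$, $$\widehat{\phi}(\omega,x^k,z^k)\ \ge\ \phi^C\big(\omega+\rho(Qx^k-z^k)\big).$$
   Context: Standing setup: $f:\mathbb{R}^n\to\mathbb{R}$ is convex and continuously differentiable; $Q\in\mathbb{R}^{q\times n}$; $X\subset\mathbb{R}^n$ is nonempty and compact (not necessarily convex) and $\operatorname{conv}(X)$ denotes its convex hull; $Z\subseteq\mathbb{R}^q$ is a linear subspace and $Z^\perp=\{v\in\mathbb{R}^q: v^\top z=0\ \forall z\in Z\}$; $\rho>0$ is fixed. Define $\phi^C(\omega)=\min\{f(x)+\omega^\top Qx : x\in\operatorname{conv}(X)\}$, the augmented Lagrangian $L_\rho(x,z,\omega)=f(x)+\omega^\top Qx+\frac{\rho}{2}\|Qx-z\|_2^2$, and $\widehat{\phi}(\omega,x,z)=L_\rho(x,z,\omega)+\frac{\rho}{2}\|Qx-z\|_2^2$. *)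

(* Defs.v *)
From mathcomp Require Import ssreflect ssrfun ssrbool eqtype ssrnat seq fintype bigop.
From Stdlib Require Import Reals.
Open Scope R_scope.

Definition vec (n : nat) := 'I_n -> R.

Definition vadd {n} (x y : vec n) : vec n := fun i => x i + y i.
Definition vsub {n} (x y : vec n) : vec n := fun i => x i - y i.
Definition vscal {n} (a : R) (x : vec n) : vec n := fun i => a * x i.
Definition vzero {n} : vec n := fun _ => 0.

Definition dot {n} (x y : vec n) : R := \big[Rplus/0]_(i < n) (x i * y i).
Definition norm2 {n} (x : vec n) : R := sqrt (dot x x).

Definition mat (q n : nat) := 'I_q -> 'I_n -> R.
Definition mulmv {q n} (Q : mat q n) (x : vec n) : vec q :=
  fun i => \big[Rplus/0]_(j < n) (Q i j * x j).

Definition convex_fun {n} (f : vec n -> R) : Prop :=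
  forall (x y : vec n) (t : R), 0 <= t <= 1 ->
    f (vadd (vscal t x) (vscal (1 - t) y)) <= t * f x + (1 - t) * f y.

Definition has_gradient {n} (f : vec n -> R) (x g : vec n) : Prop :=
  forall eps, 0 < eps -> exists delta, 0 < delta /\
    forall h : vec n, norm2 h < delta ->
      Rabs (f (vadd x h) - f x - dot g h) <= eps * norm2 h.

Definition continuous_vec {n m} (g : vec n -> vec m) : Prop :=
  forall x eps, 0 < eps -> exists delta, 0 < delta /\
    forall y, norm2 (vsub y x) < delta -> norm2 (vsub (g y) (g x)) < eps.

Definition cont_diff {n} (f : vec n -> R) : Prop :=
  exists grad : vec n -> vec n,
    (forall x, has_gradient f x (grad x)) /\ continuous_vec grad.

(* compactness of a subset of R^n (sequential compactness, = Heine-Borel in R^n) *)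
Definition compact_set {n} (X : vec n -> Prop) : Prop :=
  forall u : nat -> vec n, (forall k, X (u k)) ->
    exists (phi : nat -> nat) (l : vec n),
      (forall k, (phi k < phi (S k))%nat) /\ X l /\
      forall eps, 0 < eps -> exists N, forall k, (N <= k)%nat ->
        norm2 (vsub (u (phi k)) l) < eps.

Definition conv {n} (X : vec n -> Prop) (x : vec n) : Prop :=
  exists (m : nat) (lam : 'I_m -> R) (p : 'I_m -> vec n),
    (forall k, 0 <= lam k) /\ \big[Rplus/0]_(k < m) lam k = 1 /\
    (forall k, X (p k)) /\
    forall i, x i = \big[Rplus/0]_(k < m) (lam k * p k i).

Definition subspace {q} (Z : vec q -> Prop) : Prop :=
  Z vzero /\ (forall x y, Z x -> Z y -> Z (vadd x y)) /\
  (forall a x, Z x -> Z (vscal a x)).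

Definition perp {q} (Z : vec q -> Prop) (v : vec q) : Prop :=
  forall z, Z z -> dot v z = 0.

Definition L_rho {n q} (f : vec n -> R) (Q : mat q n) (rho : R)
  (x : vec n) (z w : vec q) : R :=
  f x + dot w (mulmv Q x) + rho / 2 * (norm2 (vsub (mulmv Q x) z)) ^ 2.

Definition phihat {n q} (f : vec n -> R) (Q : mat q n) (rho : R)
  (w : vec q) (x : vec n) (z : vec q) : R :=
  L_rho f Q rho x z w + rho / 2 * (norm2 (vsub (mulmv Q x) z)) ^ 2.

(* "m = phi^C(w)": m is the minimum of f(x) + w^T Q x over conv(X)
   (the minimum exists under the standing assumptions). *)
Definition is_phiC {n q} (f : vec n -> R) (Q : mat q n) (X : vec n -> Prop)
  (w : vec q) (m : R) : Prop :=
  (exists x, conv X x /\ f x + dot w (mulmv Q x) = m) /\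
  (forall x, conv X x -> m <= f x + dot w (mulmv Q x)).

(* Main.v *)
Require Import Defs.
From mathcomp Require Import ssreflect ssrfun ssrbool eqtype ssrnat seq fintype bigop.
From Stdlib Require Import Reals Lra.
From HB Require Import structures.
Open Scope R_scope.

Lemma RplusA' : associative Rplus.
Proof. move=> x y z; ring. Qed.
Lemma RplusC' : commutative Rplus.
Proof. move=> x y; ring. Qed.
Lemma Rplus0' : left_id 0 Rplus.
Proof. move=> x; ring. Qed.
HB.instance Definition _ := Monoid.isComLaw.Build R 0 Rplus RplusA' RplusC' Rplus0'.

Lemma sum_lin n (F G : 'I_n -> R) a b :
  \big[Rplus/0]_(i<n) (a * F i + b * G i) =
  a * \big[Rplus/0]_(i<n) F i + b * \big[Rplus/0]_(i<n) G i.
Proof.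
elim: n F G => [|n IH] F G; first by rewrite !big_ord0; ring.
rewrite !big_ord_recr /= IH.
set s1 := \big[_/_]_(i < n) F _; set s2 := \big[_/_]_(i < n) G _.
change (a * s1 + b * s2 + (a * F ord_max + b * G ord_max) = a * (s1 + F ord_max) + b * (s2 + G ord_max)); ring.
Qed.

Lemma sum_ge0 n (F : 'I_n -> R) : (forall i, 0 <= F i) -> 0 <= \big[Rplus/0]_(i<n) F i.
Proof.
elim: n F => [|n IH] F H; first by rewrite big_ord0; lra.
rewrite big_ord_recr /=. have Hs := IH (fun i => F (widen_ord (leqnSn n) i)) (fun i => H _).
move: Hs. set s := \big[_/_]_(i < n) _ => Hs.
change (0 <= s + F ord_max). have := H ord_max. lra.
Qed.

Lemma sum_ext n (F G : 'I_n -> R) : (forall i, F i = G i) ->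
  \big[Rplus/0]_(i<n) F i = \big[Rplus/0]_(i<n) G i.
Proof. move=> H; apply: eq_bigr => i _; exact: H. Qed.

Lemma sum_lin2 n (H F G : 'I_n -> R) a b : (forall i, H i = a * F i + b * G i) ->
  \big[Rplus/0]_(i<n) H i =
  a * \big[Rplus/0]_(i<n) F i + b * \big[Rplus/0]_(i<n) G i.
Proof. move=> E; rewrite -sum_lin; exact: sum_ext. Qed.

Lemma dot_ge0 n (x : vec n) : 0 <= dot x x.
Proof. apply: sum_ge0 => i; nra. Qed.

Lemma norm2_sq n (x : vec n) : norm2 x ^ 2 = dot x x.
Proof. rewrite /norm2 pow2_sqrt //; exact: dot_ge0. Qed.

Theorem lemma2 (n q : nat) (f : vec n -> R) (Q : mat q n)
  (X : vec n -> Prop) (Z : vec q -> Prop) (rho : R)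
  (Hfconv : convex_fun f) (Hf1 : cont_diff f)
  (HXne : exists x, X x) (HXc : compact_set X)
  (HZ : subspace Z) (Hrho : 0 < rho)
  (xk : vec n) (zk : vec q)
  (Hxk : conv X xk) (Hzk : Z zk)
  (Hzopt : forall z, Z z -> norm2 (vsub (mulmv Q xk) zk) <= norm2 (vsub (mulmv Q xk) z))
  (w : vec q) (Hw : perp Z w) (m : R)
  (Hm : is_phiC f Q X (vadd w (vscal rho (vsub (mulmv Q xk) zk))) m) :
  phihat f Q rho w xk zk >= m.
Proof.
set p := mulmv Q xk in Hzopt Hm *.
set r := vsub p zk.
have Hle := (proj2 Hm) xk Hxk.
have E1 : dot (vadd w (vscal rho r)) p = dot w p + rho * dot r p.
  rewrite /dot (sum_lin2 _ _ (fun i => w i * p i) (fun i => r i * p i) 1 rho).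
  ring. move=> i; rewrite /vadd /vscal; ring.
have E2 : dot r p = dot r r + dot r zk.
  rewrite /dot (sum_lin2 _ _ (fun i => r i * r i) (fun i => r i * zk i) 1 1).
  ring. move=> i; rewrite /r /vsub; ring.
set a := dot r zk. set b := dot zk zk.
have Hb : 0 <= b by exact: dot_ge0.
have Ht : forall t, 0 <= - 2 * t * a + t * t * b.
  move=> t.
  have HZt : Z (vscal (1 + t) zk) by case: HZ => _ [_ H3]; exact: H3.
  have := Hzopt _ HZt.
  move/(sqrt_le_0 _ _ (dot_ge0 _ _) (dot_ge0 _ _)).
  have -> : dot (vsub p (vscal (1 + t) zk)) (vsub p (vscal (1 + t) zk))
          = 1 * dot r r + 1 * (- 2 * t * a + t * t * b).
    rewrite /a /b /dot.
    have Ei := @sum_lin2 q (fun i => - 2 * t * (r i * zk i) + t * t * (zk i * zk i)) (fun i => r i * zk i) (fun i => zk i * zk i) (-2*t) (t*t) (fun i => erefl).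
    rewrite -Ei. apply: sum_lin2 => i; rewrite /r /vsub /vscal; ring.
  rewrite /r. lra.
have Ha : a <= 0.
  apply: Rnot_lt_le => Ha.
  have := Ht (a / (b + 1)).
  have Hb1 : 0 < b + 1 by lra.
  have -> : - 2 * (a / (b + 1)) * a + a / (b + 1) * (a / (b + 1)) * b
          = (a * a / ((b + 1) * (b + 1))) * (b - 2 * (b + 1)).
    field; lra.
  have : 0 < a * a / ((b + 1) * (b + 1)).
    apply: Rdiv_lt_0_compat; nra.
  nra.
rewrite /phihat /L_rho -/p -/r !norm2_sq.
move: Hle; rewrite E1 E2 -/a => Hle. have := Rmult_le_compat_l rho a 0 (Rlt_le _ _ Hrho) Ha. lra.
Qed.
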